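(* Let $n\ge 3$, $u>0$, and let $S=[A_0,\dots,A_n]$ be an $n$-simplex with $\|A_i-A_0\|^2=v_i$ for $1\le i\le n$ and $\|A_i-A_j\|^2=u$ for $1\le i<j\le n$ (denoted $PK[n;u;v_1,\dots,v_n]$). Then its Cayley–Menger determinant is $$\mathcal{C}(S)=(-u)^{n-2}\Big[n(u^2+v_1^2+\cdots+v_n^2)-(u+v_1+\cdots+v_n)^2\Big],$$ and its inner Cayley–Menger determinant is $$\mathcal{D}(S)=(-u)^{n-1}\Big[(n-1)(v_1^2+\cdots+v_n^2)-(v_1+\cdots+v_n)^2\Big].$$
   Context: An $n$-simplex is the convex hull $[A_0,\dots,A_n]$ of $n+1$ affinely independent points in a Euclidean space. With $a_{i,j}=\|A_i-A_j\|^2$, the Cayley–Menger determinant $\mathcal{C}(S)$ is the $(n+2)\times(n+2)$ determinant with rows and columns indexed by $-1,0,\dots,n$, whose entries are $c_{i,i}=0$, $c_{-1,j}=c_{j,-1}=1$ for $j\ne -1$, and $c_{i,j}=a_{i,j}$ otherwise. The inner Cayley–Menger determinant $\mathcal{D}(S)$ is the $(n+1)\times(n+1)$ determinant $\det(a_{i,j})_{0\le i,j\le n}$ (i.e. $\mathcal{C}(S)$ with its first row and first column deleted). *)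

(* Defs.v *)
From HB Require Import structures.
From mathcomp Require Import all_boot all_order all_algebra.
Set Implicit Arguments. Unset Strict Implicit. Unset Printing Implicit Defensive.
Import Order.TTheory GRing.Theory Num.Theory.
Local Open Scope ring_scope.

Definition sqdist (R : realFieldType) (m : nat) (x y : 'rV[R]_m) : R :=
  \sum_(k < m) (x 0 k - y 0 k) ^+ 2.

Definition affinely_independent (R : realFieldType) (m n : nat)
  (A : 'I_n.+1 -> 'rV[R]_m) : bool :=
  row_free (\matrix_(i < n) (A (lift ord0 i) - A ord0)).

(* Cayley-Menger matrix: rows/columns indexed by -1,0,...,n, where index
   ord0 of 'I_(n.+2) plays the role of -1 and lift ord0 k plays k. *)
Definition cm_matrix (R : realFieldType) (m n : nat) (A : 'I_n.+1 -> 'rV[R]_m)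
  : 'M[R]_(n.+2) :=
  \matrix_(i, j)
    if i == j then 0 else
    match unlift ord0 i, unlift ord0 j with
    | Some i', Some j' => sqdist (A i') (A j')
    | _, _ => 1
    end.

Definition cayley_menger (R : realFieldType) (m n : nat) (A : 'I_n.+1 -> 'rV[R]_m) : R :=
  \det (cm_matrix A).

Definition inner_cayley_menger (R : realFieldType) (m n : nat) (A : 'I_n.+1 -> 'rV[R]_m) : R :=
  \det (\matrix_(i, j) sqdist (A i) (A j) : 'M[R]_(n.+1)).

(* Main.v *)
Require Import Defs.
From HB Require Import structures.
From mathcomp Require Import all_boot all_order all_algebra.
From mathcomp Require Import ring lra zify.
Set Implicit Arguments. Unset Strict Implicit. Unset Printing Implicit Defensive.
Import Order.TTheory GRing.Theory Num.Theory.
Local Open Scope ring_scope.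

Lemma sylv (R : comRingType) N k (X : 'M[R]_(N,k)) (Y : 'M[R]_(k,N)) :
  \det (1%:M - X *m Y) = \det (1%:M - Y *m X).
Proof.
have e1 : block_mx 1%:M 0 (-Y) 1%:M *m block_mx 1%:M X Y 1%:M
          = block_mx 1%:M X 0 (1%:M - Y *m X).
  rewrite mulmx_block !mul1mx !mul0mx !mulmx1 !addr0 addNr mulNmx addrC //.

have e2 : block_mx 1%:M X Y 1%:M *m block_mx 1%:M 0 (-Y) 1%:M
          = block_mx (1%:M - X *m Y) X 0 1%:M.
  by rewrite mulmx_block !mul1mx !mulmx0 !mulmx1 !add0r mulmxN addrN.

have := congr1 determinant e1; have := congr1 determinant e2.
rewrite !det_mulmx !det_lblock !det_ublock !det1 !mul1r !mulr1 => <- <-.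
by [].
Qed.

Lemma det_lowrank (R : fieldType) N k (c : R) (X : 'M[R]_(N,k)) (Y : 'M[R]_(k,N)) :
  c != 0 -> \det (c%:M + X *m Y) = c ^+ N * \det (1%:M + c^-1 *: (Y *m X)).
Proof.
move=> c0.
have -> : c%:M + X *m Y = c *: (1%:M - X *m (- c^-1 *: Y)).
  by rewrite scalerBr scalemx1 -scalemxAr scalerA mulrN divff // scaleN1r opprK.
rewrite detZ sylv -scalemxAl scaleNr opprK.
by [].
Qed.

Lemma det3E (R : comRingType) (B : 'M[R]_3) :
  let o k (h : (k < 3)%N) := Ordinal h in
  \det B = B (o 0 isT) (o 0 isT) * (B (o 1 isT) (o 1 isT) * B (o 2 isT) (o 2 isT) - B (o 1 isT) (o 2 isT) * B (o 2 isT) (o 1 isT))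
         - B (o 0 isT) (o 1 isT) * (B (o 1 isT) (o 0 isT) * B (o 2 isT) (o 2 isT) - B (o 1 isT) (o 2 isT) * B (o 2 isT) (o 0 isT))
         + B (o 0 isT) (o 2 isT) * (B (o 1 isT) (o 0 isT) * B (o 2 isT) (o 1 isT) - B (o 1 isT) (o 1 isT) * B (o 2 isT) (o 0 isT)).
Proof.
move=> o.
rewrite (expand_det_row _ ord0) !big_ord_recl big_ord0 /cofactor.
rewrite !(expand_det_row _ ord0) !big_ord_recl !big_ord0 /cofactor.
rewrite !det_mx11 !mxE /= /bump /=.
pose F := fun i j : nat => B (inord i) (inord j).
have HB : forall x y, B x y = F x y by move=> x y; rewrite /F !inord_val.
rewrite /o !HB; clearbody F => /=.
ring.
Qed.

Lemma det4E (R : comRingType) (A : 'M[R]_4) :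
  let o k (h : (k < 4)%N) := Ordinal h in
  let F i j (hi : (i < 4)%N) (hj : (j < 4)%N) := A (o i hi) (o j hj) in
  \det A = F 0 0 isT isT * (F 1 1 isT isT * (F 2 2 isT isT * F 3 3 isT isT - F 2 3 isT isT * F 3 2 isT isT)
       - F 1 2 isT isT * (F 2 1 isT isT * F 3 3 isT isT - F 2 3 isT isT * F 3 1 isT isT)
       + F 1 3 isT isT * (F 2 1 isT isT * F 3 2 isT isT - F 2 2 isT isT * F 3 1 isT isT))
  - F 0 1 isT isT * (F 1 0 isT isT * (F 2 2 isT isT * F 3 3 isT isT - F 2 3 isT isT * F 3 2 isT isT)
       - F 1 2 isT isT * (F 2 0 isT isT * F 3 3 isT isT - F 2 3 isT isT * F 3 0 isT isT)
       + F 1 3 isT isT * (F 2 0 isT isT * F 3 2 isT isT - F 2 2 isT isT * F 3 0 isT isT))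
  + F 0 2 isT isT * (F 1 0 isT isT * (F 2 1 isT isT * F 3 3 isT isT - F 2 3 isT isT * F 3 1 isT isT)
       - F 1 1 isT isT * (F 2 0 isT isT * F 3 3 isT isT - F 2 3 isT isT * F 3 0 isT isT)
       + F 1 3 isT isT * (F 2 0 isT isT * F 3 1 isT isT - F 2 1 isT isT * F 3 0 isT isT))
  - F 0 3 isT isT * (F 1 0 isT isT * (F 2 1 isT isT * F 3 2 isT isT - F 2 2 isT isT * F 3 1 isT isT)
       - F 1 1 isT isT * (F 2 0 isT isT * F 3 2 isT isT - F 2 2 isT isT * F 3 0 isT isT)
       + F 1 2 isT isT * (F 2 0 isT isT * F 3 1 isT isT - F 2 1 isT isT * F 3 0 isT isT)).
Proof.
move=> o F.
rewrite (expand_det_row _ ord0) !big_ord_recl big_ord0 /cofactor !det3E.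
rewrite !mxE.
pose G := fun i j : nat => A (inord i) (inord j).
have HB : forall x y, A x y = G x y by move=> x y; rewrite /G !inord_val.
rewrite /F /o !HB; clearbody G => /=.
rewrite /bump /=.
ring.
Qed.

Section S.
Variables (R : fieldType) (n : nat) (u : R) (v : 'I_n -> R).
Definition vv (r : 'I_n.+1) : R := if unlift ord0 r is Some i then v i else 0.
Definition Xi : 'M[R]_(n.+1, 3) := \matrix_(r, l) match nat_of_ord l with 0 => (r == ord0)%:R | 1 => (r != ord0)%:R | _ => vv r end.
Definition Yi : 'M[R]_(3, n.+1) := \matrix_(l, r) match nat_of_ord l with 0 => (if r == ord0 then u else vv r) | 1 => (r != ord0)%:R * u | _ => (r == ord0)%:R end.
Lemma test (M : 'M[R]_n.+1) : 
 (forall i, M i i = 0) -> (forall i, M ord0 (lift ord0 i) = v i) -> (forall i, M (lift ord0 i) ord0 = v i) -> (forall i j, i != j -> M (lift ord0 i) (lift ord0 j) = u) ->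
 M = (-u)%:M + Xi *m Yi.
Proof.
move=> h0 h1 h2 h3.
apply/matrixP => r s; rewrite !mxE !big_ord_recr big_ord0 /= !mxE /=.
rewrite /vv.
case: (unliftP ord0 r) => [i|] ->; case: (unliftP ord0 s) => [j|] ->;
  rewrite ?liftK ?unlift_none ?eqxx ?(inj_eq lift_inj) ?(negbTE (neq_lift _ _)) 1?eq_sym ?(negbTE (neq_lift _ _)) /=.
- case: eqP => [->|/eqP ij]; rewrite /= ?mulr1n ?mulr0n.
    by rewrite h0; ring.
  by rewrite h3; [ring | rewrite eq_sym].
- rewrite /= ?mulr0n h2; ring.
- rewrite /= ?mulr0n h1; ring.
- rewrite /= ?mulr1n h0; ring.
Qed.

Definition sv := \sum_(i < n) v i.
Definition sq := \sum_(i < n) v i ^+ 2.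
Definition Ki : 'M[R]_3 := \matrix_(l, m) match nat_of_ord l, nat_of_ord m with
  | 0, 0 => u | 0, 1 => sv | 0, 2 => sq
  | 1, 0 => 0 | 1, 1 => n%:R * u | 1, 2 => u * sv
  | 2, 0 => 1 | _, _ => 0 end.
Lemma YXi : Yi *m Xi = Ki.
Proof.
have Hl : forall i : 'I_n, (lift ord0 i == ord0 :> 'I_n.+1) = false.
  by move=> i; rewrite eq_sym (negbTE (neq_lift _ _)).
have Hv : forall i, vv (lift ord0 i) = v i by move=> i; rewrite /vv liftK.
apply/matrixP => l m; rewrite !mxE big_ord_recl /= !mxE /=.
under eq_bigr => i _ do rewrite !mxE Hl Hv /=.
rewrite /vv unlift_none.
case: l => [[|[|[|l]]] hl] //; case: m => [[|[|[|m]]] hm] //=.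
all: under eq_bigr => i _ do rewrite ?mulr0 ?mul0r ?mulr1 ?mul1r.
all: rewrite ?mulr0 ?mul0r ?mulr1 ?mul1r ?big1_eq ?addr0 ?add0r //.
- by rewrite sumr_const card_ord mulr_natl.
- by rewrite /sv mulr_sumr.
Qed.

Lemma det3 : u != 0 -> \det (1%:M + (-u)^-1 *: Ki) = ((n%:R - 1) * sq - sv ^+ 2) / u ^+ 2.
Proof.
move=> u0.
rewrite det3E /= !mxE /= invrN.
by field.
Qed.

Definition wc (r : 'I_n.+2) : R := if unlift ord0 r is Some r' then (if unlift ord0 r' is Some i then v i else 0) else 0.
Definition isI (r : 'I_n.+2) : bool := if unlift ord0 r is Some r' then r' != ord0 else false.
Definition Xc : 'M[R]_(n.+2, 4) := \matrix_(r, l) match nat_of_ord l with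
  0 => (r == ord0)%:R | 1 => (r == lift ord0 ord0)%:R | 2 => (isI r)%:R | _ => wc r end.
Definition Yc : 'M[R]_(4, n.+2) := \matrix_(l, r) match nat_of_ord l with
  | 0 => if r == ord0 then u else 1
  | 1 => if r == ord0 then 1 else if r == lift ord0 ord0 then u else wc r
  | 2 => if r == ord0 then 1 else (isI r)%:R * u
  | _ => (r == lift ord0 ord0)%:R end.
Lemma testc (M : 'M[R]_n.+2) :
 (forall i, M i i = 0) ->
 (forall i, M ord0 (lift ord0 i) = 1) -> (forall i, M (lift ord0 i) ord0 = 1) ->
 (forall i, M (lift ord0 ord0) (lift ord0 (lift ord0 i)) = v i) ->
 (forall i, M (lift ord0 (lift ord0 i)) (lift ord0 ord0) = v i) ->
 (forall i j, i != j -> M (lift ord0 (lift ord0 i)) (lift ord0 (lift ord0 j)) = u) ->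
 M = (-u)%:M + Xc *m Yc.
Proof.
move=> h0 hm1 hm2 h1 h2 h3.
apply/matrixP => r s; rewrite !mxE !big_ord_recr big_ord0 /= !mxE /=.
rewrite /wc /isI.
have Hl : forall k (i : 'I_k), (lift ord0 i == ord0 :> 'I_k.+1) = false.
  by move=> k i; rewrite eq_sym (negbTE (neq_lift _ _)).
case: (unliftP ord0 r) => [r'|] ->; [case: (unliftP ord0 r') => [i|] ->|];
case: (unliftP ord0 s) => [s'|] ->; try case: (unliftP ord0 s') => [j|] ->;
  rewrite ?liftK ?unlift_none ?eqxx ?(inj_eq lift_inj) ?Hl ?eqxx /= ?mulr1n ?mulr0n.
all: try (case: eqP => [->|/eqP ij]; rewrite /= ?mulr1n ?mulr0n).
all: try (rewrite h3; last (first [by [] | by rewrite eq_sym])).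
all: rewrite ?h0 ?hm1 ?hm2 ?h1 ?h2; ring.
Qed.

Definition Kc : 'M[R]_4 := \matrix_(l, m) match nat_of_ord l, nat_of_ord m with
  | 0, 0 => u | 0, 1 => 1 | 0, 2 => n%:R | 0, 3 => sv
  | 1, 0 => 1 | 1, 1 => u | 1, 2 => sv | 1, 3 => sq
  | 2, 0 => 1 | 2, 1 => 0 | 2, 2 => n%:R * u | 2, 3 => u * sv
  | 3, 1 => 1 | _, _ => 0 end.
Lemma YXc : Yc *m Xc = Kc.
Proof.
have Hl : forall k (i : 'I_k), (lift ord0 i == ord0 :> 'I_k.+1) = false.
  by move=> k i; rewrite eq_sym (negbTE (neq_lift _ _)).
have Hl2 : forall i : 'I_n, (lift ord0 (lift ord0 i) == lift ord0 ord0 :> 'I_n.+2) = false.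
  by move=> i; rewrite (inj_eq lift_inj) Hl.
have Hw : forall i, wc (lift ord0 (lift ord0 i)) = v i by move=> i; rewrite /wc !liftK.
have HI : forall i, isI (lift ord0 (lift ord0 i)) by move=> i; rewrite /isI liftK Hl.
apply/matrixP => l m; rewrite !mxE !big_ord_recl /= !mxE /=.
under eq_bigr => i _ do rewrite !mxE Hl Hl2 Hw HI /=.
rewrite /wc /isI ?liftK ?unlift_none ?eqxx /=.
case: l => [[|[|[|[|l]]]] hl] //; case: m => [[|[|[|[|m]]]] hm] //=.
all: under eq_bigr => i _ do rewrite ?mulr0 ?mul0r ?mulr1 ?mul1r.
all: rewrite ?mulr0 ?mul0r ?mulr1 ?mul1r ?big1_eq ?addr0 ?add0r //.
- by rewrite sumr_const card_ord.
- by rewrite sumr_const card_ord mulr_natl.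
- by rewrite /sv mulr_sumr.
Qed.

Lemma det4 : u != 0 -> \det (1%:M + (-u)^-1 *: Kc) = (n%:R * (u ^+ 2 + sq) - (u + sv) ^+ 2) / u ^+ 4.
Proof.
move=> u0.
rewrite det4E /= !mxE /= invrN.
by field.
Qed.
End S.

Theorem theorem4p1 (R : realFieldType) (m n : nat) (u : R) (v : 'I_n -> R)
  (A : 'I_n.+1 -> 'rV[R]_m) :
  (3 <= n)%N -> 0 < u ->
  affinely_independent A ->
  (forall i : 'I_n, sqdist (A (lift ord0 i)) (A ord0) = v i) ->
  (forall i j : 'I_n, (i < j)%N -> sqdist (A (lift ord0 i)) (A (lift ord0 j)) = u) ->
  cayley_menger A =
    (- u) ^+ (n - 2) *
      (n%:R * (u ^+ 2 + \sum_(i < n) v i ^+ 2) - (u + \sum_(i < n) v i) ^+ 2)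
  /\
  inner_cayley_menger A =
    (- u) ^+ (n - 1) *
      ((n - 1)%:R * (\sum_(i < n) v i ^+ 2) - (\sum_(i < n) v i) ^+ 2).
Proof.
move=> n3 u0 _ hv hu.
have un0 : u != 0 by move: u0; rewrite lt0r => /andP[].
have un0' : - u != 0 by rewrite oppr_eq0.
have sq0 : forall x : 'rV[R]_m, sqdist x x = 0.
  by move=> x; rewrite /sqdist big1 // => k _; rewrite subrr expr0n.
have sym : forall x y : 'rV[R]_m, sqdist x y = sqdist y x.
  by move=> x y; rewrite /sqdist; apply: eq_bigr => k _; rewrite -sqrrN opprB.
have hu' : forall i j : 'I_n, i != j -> sqdist (A (lift ord0 i)) (A (lift ord0 j)) = u.
  move=> i j; rewrite neq_ltn => /orP [ij|ji]; first exact: hu.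
  by rewrite sym; apply: hu.
have Hl : forall k (i : 'I_k), (lift ord0 i == ord0 :> 'I_k.+1) = false.
  by move=> k i; rewrite eq_sym (negbTE (neq_lift _ _)).
have Hl' : forall k (i : 'I_k), (ord0 == lift ord0 i :> 'I_k.+1) = false.
  by move=> k i; rewrite (negbTE (neq_lift _ _)).
split.
- rewrite /cayley_menger (testc (M := cm_matrix A) (u := u) (v := v)).
  + rewrite det_lowrank // YXc det4 // /sv /sq.
    have -> : (n.+2 = (n - 2) + 4)%N by lia.
    by rewrite exprD; field.
  + by move=> i; rewrite mxE eqxx.
  + by move=> i; rewrite mxE Hl' unlift_none.
  + by move=> i; rewrite mxE Hl unlift_none liftK.
  + by move=> i; rewrite mxE (inj_eq lift_inj) Hl' !liftK sym hv.
  + by move=> i; rewrite mxE (inj_eq lift_inj) Hl !liftK hv.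
  + by move=> i j ij; rewrite mxE !(inj_eq lift_inj) (negbTE ij) !liftK hu'.
- rewrite /inner_cayley_menger (test (M := \matrix_(i, j) sqdist (A i) (A j)) (u := u) (v := v)).
  + rewrite det_lowrank // YXi det3 // /sv /sq.
    have -> : (n.+1 = (n - 1) + 2)%N by lia.
    rewrite exprD natrB; last by lia.
    by field.
  + by move=> i; rewrite mxE sq0.
  + by move=> i; rewrite mxE sym hv.
  + by move=> i; rewrite mxE hv.
  + by move=> i j ij; rewrite mxE hu'.
Qed.
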